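(* Let $\mathcal P=(P,T,F,\lambda)$ be a labelled Petri net with finite sets of places $P$ and transitions $T$, and let $X=X_{\mathcal P}$ be the associated $(\square(\Sigma)\times\mathbb N^P)$-presheaf. Then the sub-presheaf $X_{nac}$ and, for every $d\ge1$, the sub-presheaf $X_{\le d}$ of $X$ are finitely generated. Consequently, equipped with any finite sets of start and accept elements, they are higher-dimensional automata with counters of finite type.
   Context: Fix an alphabet $\Sigma$. $\square(\Sigma)$ is the category whose objects are finite words $a_1\cdots a_n$ over $\Sigma$ ($n\ge0$) and whose morphisms $V\to U$ (with $|V|=m$, $|U|=n$) are pairs $(f,\varepsilon)$ with $f:\{1,\dots,m\}\to\{1,\dots,n\}$ strictly increasing and letter-preserving and $\varepsilon:\{1,\dots,n\}\setminus f(\{1,\dots,m\})\to\{0,1\}$; composition of $(g,\eta):W\to V$ and $(f,\varepsilon):V\to U$ is $(fg,\theta)$ with $\theta(u)=\varepsilon(u)$ for $u\notin f(V)$ and $\theta(u)=\eta(f^{-1}(u))$ otherwise. For $U=a_1\cdots a_n$, $1\le i\le n$, $\varepsilon\in\{0,1\}$, $d^\varepsilon_i:a_1\cdots a_{i-1}a_{i+1}\cdots a_n\to U$ omits position $i$ with value $\varepsilon$ there; these generate all morphisms. The monoid $\mathbb N^P$ is viewed as a one-object category, and $\square(\Sigma)\times\mathbb N^P$ is the product category (objects: words; morphisms: pairs $(\varphi,\mathsf w)$). A labelled Petri net: places $P$, transitions $T$, flow $F\subseteq(P\times T)\sqcup(T\times P)$, labelling $\lambda:T\to\Sigma$; $\mathsf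 a(t),\mathsf b(t)\in\{0,1\}^P\subseteq\mathbb N^P$ with $\mathsf a(t)_p=1$ iff $(p,t)\in F$, $\mathsf b(t)_p=1$ iff $(t,p)\in F$. $X_{\mathcal P}$ assigns to a word $U$ the set of $(t_1,\dots,t_n;\mathsf v)$ with $t_i\in T$, $\lambda(t_1)\cdots\lambda(t_n)=U$, $\mathsf v\in\mathbb N^P$, with $X[(\mathrm{id},\mathsf w)](\mathbf t;\mathsf v)=(\mathbf t;\mathsf v+\mathsf w)$, $X[(d^0_i,\mathsf w)](t_1,\dots,t_n;\mathsf v)=(t_1,\dots,t_{i-1},t_{i+1},\dots,t_n;\mathsf v+\mathsf a(t_i)+\mathsf w)$ and $X[(d^1_i,\mathsf w)](t_1,\dots,t_n;\mathsf v)=(t_1,\dots,t_{i-1},t_{i+1},\dots,t_n;\mathsf v+\mathsf b(t_i)+\mathsf w)$. $X_{nac}$ consists of the elements $(t_1,\dots,t_n;\mathsf v)$ with the $t_i$ pairwise distinct; $X_{\le d}$ of those with $n\le d$. A presheaf $Z$ on a small category $\mathcal D$ is finitely generated if $Z\cong\operatorname{colim}_{e\in\mathcal E}\mathcal D(-,G(e))$ for some finite category $\mathcal E$ and functor $G:\mathcal E\to\mathcal D$. A higher-dimensional automaton with counters is such a presheaf with sets of start and accept elements; finite type means finitely generated with finitely many start and accept elements. *)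

(* Defs.v *)
From Stdlib Require Import Relation_Operators.
From Stdlib Require List.
From mathcomp Require Import all_boot.

Set Implicit Arguments.
Unset Strict Implicit.
Unset Printing Implicit Defensive.

Record FinCat := {
  fc_ob : finType;
  fc_hom : fc_ob -> fc_ob -> finType;
  fc_id : forall e, fc_hom e e;
  fc_comp : forall e1 e2 e3, fc_hom e2 e3 -> fc_hom e1 e2 -> fc_hom e1 e3;
  fc_compA : forall e1 e2 e3 e4 (h : fc_hom e3 e4) (g : fc_hom e2 e3)
               (f : fc_hom e1 e2),
      fc_comp h (fc_comp g f) = fc_comp (fc_comp h g) f;
  fc_idl : forall e1 e2 (f : fc_hom e1 e2), fc_comp (fc_id e2) f = f;
  fc_idr : forall e1 e2 (f : fc_hom e1 e2), fc_comp f (fc_id e1) = f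
}.
Arguments fc_id {f} e : rename.
Arguments fc_comp {f e1 e2 e3} _ _ : rename.

(* One step of the relation generating the colimit of the representables
   D(U, G -) : for alpha : e -> e' in E, (e, phi) ~ (e', G(alpha) o phi). *)
Inductive colim_step {Ob : Type} (Hom : Ob -> Ob -> Type)
    (compD : forall a b c, Hom b c -> Hom a b -> Hom a c)
    (E : FinCat) (G0 : fc_ob E -> Ob)
    (G1 : forall e e', fc_hom e e' -> Hom (G0 e) (G0 e')) (U : Ob) :
    {e : fc_ob E & Hom U (G0 e)} -> {e : fc_ob E & Hom U (G0 e)} -> Prop :=
  | ColimStep e e' (al : fc_hom e e') (phi : Hom U (G0 e)) :
      colim_step compD G1 (existT _ e phi)
                 (existT _ e' (compD _ _ _ (G1 e e' al) phi)).

(* A presheaf Z (object part Z, action act : D(a,b) -> Z b -> Z a) on a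
   category D (objects Ob, morphisms Hom, identities idD, composition compD)
   is finitely generated iff Z is isomorphic to colim_{e in E} D(-, G e) for a
   finite category E and a functor G : E -> D.  The colimit of presheaves is
   computed objectwise as the quotient of  Sigma_e D(U, G e)  by the
   equivalence relation generated by colim_step; an isomorphism from it to Z
   is given by a natural family Phi_U of surjections whose kernel is exactly
   that equivalence relation. *)
Definition fin_generated {Ob : Type} (Hom : Ob -> Ob -> Type)
    (idD : forall a, Hom a a)
    (compD : forall a b c, Hom b c -> Hom a b -> Hom a c)
    (Z : Ob -> Type) (act : forall a b, Hom a b -> Z b -> Z a) : Prop :=
  exists (E : FinCat) (G0 : fc_ob E -> Ob)
         (G1 : forall e e', fc_hom e e' -> Hom (G0 e) (G0 e')),
    (forall e, G1 e e (fc_id e) = idD (G0 e)) /\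
    (forall e1 e2 e3 (g : fc_hom e2 e3) (f : fc_hom e1 e2),
        G1 e1 e3 (fc_comp g f) = compD _ _ _ (G1 e2 e3 g) (G1 e1 e2 f)) /\
    exists Phi : forall U, {e : fc_ob E & Hom U (G0 e)} -> Z U,
      (forall U (z : Z U), exists x, Phi U x = z) /\
      (forall U V (psi : Hom V U) (x : {e : fc_ob E & Hom U (G0 e)}),
          Phi V (existT _ (projT1 x) (compD _ _ _ (projT2 x) psi))
          = act V U psi (Phi U x)) /\
      (forall U (x y : {e : fc_ob E & Hom U (G0 e)}),
          Phi U x = Phi U y <-> clos_refl_sym_trans _ (@colim_step Ob Hom compD E G0 G1 U) x y).

Arguments fin_generated {Ob} Hom idD compD Z act.

Definition fin_pred {A : Type} (S : A -> Prop) : Prop :=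
  exists l : seq A, forall x, S x -> List.In x l.

Definition hda_fin_type {Ob : Type} (Hom : Ob -> Ob -> Type)
    (idD : forall a, Hom a a)
    (compD : forall a b c, Hom b c -> Hom a b -> Hom a c)
    (Z : Ob -> Type) (act : forall a b, Hom a b -> Z b -> Z a)
    (start accept : {U : Ob & Z U} -> Prop) : Prop :=
  fin_generated Hom idD compD Z act /\ fin_pred start /\ fin_pred accept.

Arguments hda_fin_type {Ob} Hom idD compD Z act start accept.

(* Encoding of a morphism (f, eps) : V -> U of box(Sigma), |U| = n:
   a sequence s of length n over option bool, with s_u = None iff u is in
   the image of f, and s_u = Some (eps u) otherwise.  f is then the unique
   increasing map onto the None-positions; letter preservation says that
   the letters of U at the None-positions spell V. *)
Definition keepmask (s : seq (option bool)) : bitseq := [seq o == None | o <- s].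
Definition kept {A : Type} (s : seq (option bool)) (U : seq A) : seq A :=
  mask (keepmask s) U.

Definition cube_hom (Sigma : finType) (V U : seq Sigma) :=
  {s : seq (option bool) | (size s == size U) && (kept s U == V)}.

(* composition (f,eps) o (g,eta): eps outside im f, eta o f^-1 on im f *)
Fixpoint ccomp (s t : seq (option bool)) : seq (option bool) :=
  match s with
  | [::] => [::]
  | Some b :: s' => Some b :: ccomp s' t
  | None :: s' => head None t :: ccomp s' (behead t)
  end.

Lemma ccomp_ok (A : Type) (s t : seq (option bool)) (U : seq A) :
  size s = size U -> size t = size (kept s U) ->
  size (ccomp s t) = size U /\ kept (ccomp s t) U = kept t (kept s U).
Proof.
rewrite /kept.
elim: s t U => [|o s IH] t [|u U] //=.
- by case: t.
- move=> [] Hs; case: o => [b|] /=.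
  + by move=> Ht; have [-> ->] := IH t U Hs Ht.
  + case: t => [|x t] //= [] Ht.
    have [-> H2] := IH t U Hs Ht; split => //.
    by case: (x == None); rewrite /= H2.
Qed.

Lemma cube_comp_proof (Sigma : finType) (W V U : seq Sigma)
  (f : cube_hom V U) (g : cube_hom W V) :
  (size (ccomp (val f) (val g)) == size U)
  && (kept (ccomp (val f) (val g)) U == W).
Proof.
case: f g => s Hsv [t Htw] /=.
case/andP: Hsv => /eqP Hs /eqP HV; case/andP: Htw => /eqP Ht /eqP HW.
have [-> ->] := ccomp_ok Hs (etrans Ht (esym (f_equal size HV))).
by rewrite HV HW !eqxx.
Qed.

Definition cube_comp (Sigma : finType) (W V U : seq Sigma)
  (f : cube_hom V U) (g : cube_hom W V) : cube_hom W U :=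
  exist _ (ccomp (val f) (val g)) (cube_comp_proof f g).

Lemma cube_id_proof (Sigma : finType) (U : seq Sigma) :
  (size (nseq (size U) (@None bool)) == size U)
  && (kept (nseq (size U) None) U == U).
Proof.
by rewrite size_nseq eqxx /kept /keepmask map_nseq /= mask_true.
Qed.

Definition cube_id (Sigma : finType) (U : seq Sigma) : cube_hom U U :=
  exist _ (nseq (size U) None) (cube_id_proof U).

(* the product category box(Sigma) x N^P  (N^P a one-object category) *)
Definition bhom (Sigma P : finType) (V U : seq Sigma) : Type :=
  (cube_hom V U * {ffun P -> nat})%type.

Definition bid (Sigma P : finType) (U : seq Sigma) : bhom P U U :=
  (cube_id U, [ffun=> 0]).

Definition bcomp (Sigma P : finType) (W V U : seq Sigma)
  (f : bhom P V U) (g : bhom P W V) : bhom P W U :=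
  (cube_comp f.1 g.1, [ffun p => f.2 p + g.2 p]).

(* A labelled Petri net with places P, transitions T, flow relation
   F = {(p,t) | pre p t} u {(t,p) | post t p}, labelling lam : T -> Sigma. *)
Record petri_net (Sigma : finType) := {
  pn_P : finType;
  pn_T : finType;
  pn_pre : pn_P -> pn_T -> bool;
  pn_post : pn_T -> pn_P -> bool;
  pn_lab : pn_T -> Sigma
}.

Section PetriPresheaf.
Variables (Sigma : finType) (N : petri_net Sigma).
Local Notation P := (pn_P N).
Local Notation T := (pn_T N).

Definition pn_a (t : T) : {ffun P -> nat} := [ffun p => nat_of_bool (pn_pre p t)].
Definition pn_b (t : T) : {ffun P -> nat} := [ffun p => nat_of_bool (pn_post t p)].

Definition Xob (U : seq Sigma) : Type :=
  {x : seq T * {ffun P -> nat} | map (@pn_lab _ N) x.1 == U}.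

Definition face_contrib (x : T * option bool) : {ffun P -> nat} :=
  match x.2 with
  | Some false => pn_a x.1
  | Some true => pn_b x.1
  | None => [ffun=> 0]
  end.

Definition Xact_raw (s : seq (option bool)) (w : {ffun P -> nat})
  (x : seq T * {ffun P -> nat}) : seq T * {ffun P -> nat} :=
  (kept s x.1,
   [ffun p => x.2 p + (\sum_(y <- zip x.1 s) face_contrib y p) + w p]).

Lemma Xact_proof (V U : seq Sigma) (m : bhom P V U) (x : Xob U) :
  map (@pn_lab _ N) (Xact_raw (val m.1) m.2 (val x)).1 == V.
Proof.
case: m x => [[s Hs] w] [[ts v] Hx] /=.
case/andP: Hs => _ /eqP <-; move/eqP: Hx => <-.
by rewrite /kept map_mask.
Qed.

Definition Xact (V U : seq Sigma) (m : bhom P V U) (x : Xob U) : Xob V :=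
  exist _ (Xact_raw (val m.1) m.2 (val x)) (Xact_proof m x).

Definition Xnac_ob (U : seq Sigma) : Type := {x : Xob U | uniq (val x).1}.

Lemma Xnac_proof (V U : seq Sigma) (m : bhom P V U) (x : Xnac_ob U) :
  uniq (val (Xact m (val x))).1.
Proof. by case: x => x /= Hx; rewrite /kept mask_uniq. Qed.

Definition Xnac_act (V U : seq Sigma) (m : bhom P V U) (x : Xnac_ob U) : Xnac_ob V :=
  exist _ (Xact m (val x)) (Xnac_proof m x).

Definition Xle_ob (d : nat) (U : seq Sigma) : Type := {x : Xob U | size (val x).1 <= d}.

Lemma Xle_proof (d : nat) (V U : seq Sigma) (m : bhom P V U) (x : Xle_ob d U) :
  size (val (Xact m (val x))).1 <= d.
Proof.
case: x => x /= Hx; apply: leq_trans Hx.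
by rewrite /kept size_subseq // mask_subseq.
Qed.

Definition Xle_act (d : nat) (V U : seq Sigma) (m : bhom P V U) (x : Xle_ob d U) :
  Xle_ob d V :=
  exist _ (Xact m (val x)) (Xle_proof m x).

End PetriPresheaf.

(* Main.v *)
Require Import Defs.
From Stdlib Require Import Relation_Operators.
From mathcomp Require Import all_boot.
From mathcomp Require Import zify.

Set Implicit Arguments.
Unset Strict Implicit.
Unset Printing Implicit Defensive.

Lemma ccomp_nseql (s : seq (option bool)) : ccomp (nseq (size s) None) s = s.
Proof. by elim: s => [|x s IH] //=; rewrite IH. Qed.

Lemma ccomp_nseqr (s : seq (option bool)) k : ccomp s (nseq k None) = s.
Proof.
elim: s k => [|[b|] s IH] k //=; first by rewrite IH.
by case: k => [|k] /=; [rewrite (IH 0) | rewrite IH].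
Qed.

Lemma ccompA (s t u : seq (option bool)) :
  count (pred1 None) s <= size t -> ccomp s (ccomp t u) = ccomp (ccomp s t) u.
Proof.
elim: s t u => [|[b|] s IH] t u //=.
- by move=> H; rewrite IH.
- case: t => [|[b|] t] //= H; by rewrite IH.
Qed.

Lemma size_kept (A : Type) (s : seq (option bool)) (U : seq A) :
  size s = size U -> size (kept s U) = count (pred1 None) s.
Proof. by move=> H; rewrite /kept size_mask ?size_map // count_map. Qed.

Lemma kept_nseq (A : Type) (U : seq A) n : size U <= n -> kept (nseq n None) U = U.
Proof. by move=> H; rewrite /kept /keepmask map_nseq mask_true. Qed.

Section Gen.
Variables (Sigma : finType) (N : petri_net Sigma).
Local Notation P := (pn_P N).
Local Notation T := (pn_T N).
Local Notation lab := (@pn_lab _ N).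
Variable Q : pred (seq T).
Hypothesis HQ : forall m t, Q t -> Q (mask m t).
Variable M : nat.
Hypothesis HM : forall t, Q t -> size t <= M.

Definition csum (t : seq T) (s : seq (option bool)) (p : P) : nat :=
  \sum_(y <- zip t s) face_contrib y p.

Lemma csum_nseq t k p : csum t (nseq k None) p = 0.
Proof.
rewrite /csum; elim: t k => [|x t IH] [|k] /=; rewrite ?big_nil //.
by rewrite big_cons IH /face_contrib /= ffunE.
Qed.

Lemma csum_le t s p : csum t s p <= size t.
Proof.
rewrite /csum; apply: (@leq_trans (\sum_(y <- zip t s) 1)).
  apply: leq_sum => -[x [[]|]] _; rewrite /face_contrib /= ?ffunE //;
  rewrite ?ffunE; exact: leq_b1.
by rewrite sum1_size size_zip geq_minl.
Qed.

Lemma csum_comp (t : seq T) s u p : size s = size t ->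
  csum t (ccomp s u) p = csum t s p + csum (kept s t) u p.
Proof.
rewrite /csum /kept.
elim: s t u => [|[b|] s IH] [|x t] u //= H.
- by case: u => [|? ?]; rewrite !big_nil.
- have {}H : size s = size t by move: H => [].
  rewrite !big_cons IH //; lia.
- have {}H : size s = size t by move: H => [].
  case: u => [|o u] /=.
    have z0 : forall (A B : Type) (s : seq A), zip s (@nil B) = [::] by move=> ? ? [].
    by rewrite !big_cons IH // !z0 !big_nil /face_contrib /= !ffunE; lia.
  by rewrite !big_cons IH // /face_contrib /= !ffunE; lia.
Qed.

Fixpoint seqs n : seq (seq T) :=
  if n is n'.+1 then [::] :: [seq x :: s | x <- enum T, s <- seqs n'] else [:: [::]].

Lemma seqsP n t : size t <= n -> t \in seqs n.
Proof.
elim: n t => [|n IH] [|x t] //= H.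
rewrite inE; apply/orP; right; apply: allpairs_f; [by rewrite mem_enum | exact: IH].
Qed.

Definition vecs K : seq {ffun P -> nat} :=
  [seq [ffun p => nat_of_ord (f p)] | f : {ffun P -> 'I_K.+1} <- enum {ffun P -> 'I_K.+1}].

Lemma vecsP K (c : {ffun P -> nat}) : (forall p, c p <= K) -> c \in vecs K.
Proof.
move=> H; apply/mapP; exists [ffun p => inord (c p) : 'I_K.+1]; first by rewrite mem_enum.
by apply/ffunP => p; rewrite !ffunE inordK // ltnS.
Qed.

Definition L : seq (seq T * {ffun P -> nat}) :=
  [seq x <- [seq (t, c) | t <- seqs M, c <- vecs M] | Q x.1].

Lemma LP t (c : {ffun P -> nat}) : Q t -> (forall p, c p <= M) -> (t, c) \in L.
Proof.
move=> Ht Hc; rewrite mem_filter /= Ht /=.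
apply: allpairs_f; [exact: seqsP (HM Ht) | exact: vecsP].
Qed.

Lemma LQ x : x \in L -> Q x.1.
Proof. by rewrite mem_filter => /andP[]. Qed.

Definition Obj : finType := seq_sub L.

Definition good (a b : seq T * {ffun P -> nat}) (s : seq (option bool)) : bool :=
  (kept s b.1 == a.1) && [forall p, b.2 p + csum b.1 s p <= a.2 p].

Definition Hom (e e' : Obj) : finType :=
  {s : (size (ssval e').1).-tuple (option bool) | good (ssval e) (ssval e') s}.

Lemma homP e e' (h h' : Hom e e') : tval (val h) = tval (val h') -> h = h'.
Proof. by move=> H; do 2 apply: val_inj. Qed.

Lemma good_id (e : Obj) : good (ssval e) (ssval e) (nseq (size (ssval e).1) None).
Proof.
rewrite /good kept_nseq // eqxx /=; apply/forallP => p.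
by rewrite csum_nseq addn0.
Qed.

Definition idH (e : Obj) : Hom e e := exist _ (nseq_tuple (size (ssval e).1) None) (good_id e).

Section Comp.
Variables (e1 e2 e3 : Obj) (g : Hom e2 e3) (f : Hom e1 e2).

Lemma comp_facts : size (ccomp (val g) (val f)) = size (ssval e3).1 /\
  kept (ccomp (val g) (val f)) (ssval e3).1 = (ssval e1).1.
Proof.
case: g f => [gs Hg] [fs Hf] /=.
case/andP: Hg => /eqP Hg _; case/andP: Hf => /eqP Hf _.
have [-> ->] := ccomp_ok (size_tuple gs) (etrans (size_tuple fs) (f_equal size (esym Hg))).
by rewrite Hg Hf.
Qed.

Lemma comp_size : size (ccomp (val g) (val f)) == size (ssval e3).1.
Proof. by case: comp_facts => -> _. Qed.

Lemma comp_good : good (ssval e1) (ssval e3) (ccomp (val g) (val f)).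
Proof.
rewrite /good; case: comp_facts => _ ->; rewrite eqxx /=.
case: g f => [gs Hg] [fs Hf] /=.
case/andP: Hg => /eqP Hg /forallP Hg2; case/andP: Hf => /eqP Hf /forallP Hf2.
apply/forallP => p; rewrite csum_comp ?size_tuple // Hg.
by rewrite addnA; apply: leq_trans (leq_add (Hg2 p) (leqnn _)) (Hf2 p).
Qed.

Definition compH : Hom e1 e3 := exist _ (Tuple comp_size) comp_good.
End Comp.

Lemma compA_E (e1 e2 e3 e4 : Obj) (h : Hom e3 e4) (g : Hom e2 e3) (f : Hom e1 e2) :
  compH h (compH g f) = compH (compH h g) f.
Proof.
apply: homP => /=; apply: ccompA.
case: h => [hs Hh] /=; case/andP: Hh => /eqP Hh _.
by rewrite size_tuple -(size_kept (size_tuple hs)) Hh.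
Qed.

Lemma idl_E (e1 e2 : Obj) (f : Hom e1 e2) : compH (idH e2) f = f.
Proof.
apply: homP => /=; case: f => fs Hf /=.
by rewrite -{1}(size_tuple fs) ccomp_nseql.
Qed.

Lemma idr_E (e1 e2 : Obj) (f : Hom e1 e2) : compH f (idH e1) = f.
Proof. by apply: homP => /=; rewrite ccomp_nseqr. Qed.

Definition E : FinCat := {| fc_ob := Obj; fc_hom := Hom; fc_id := idH; fc_comp := compH;
  fc_compA := compA_E; fc_idl := idl_E; fc_idr := idr_E |}.

Definition G0 (e : Obj) : seq Sigma := map lab (ssval e).1.

Definition Zq (U : seq Sigma) : Type := {x : Xob N U | Q (val x).1}.

Lemma actq_proof (V U : seq Sigma) (m : @bhom Sigma P V U) (x : Zq U) :
  Q (val (Xact m (val x))).1.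
Proof. by case: x => x /= Hx; exact: HQ. Qed.

Definition actq (V U : seq Sigma) (m : @bhom Sigma P V U) (x : Zq U) : Zq V :=
  exist _ (Xact m (val x)) (actq_proof m x).

Lemma ZqP U (z z' : Zq U) : val (val z) = val (val z') -> z = z'.
Proof. by move=> H; do 2 apply: val_inj. Qed.

Definition Gel (e : Obj) : Zq (G0 e) :=
  exist _ (exist _ (ssval e) (eqxx (G0 e))) (LQ (ssvalP e)).

Definition wof (a b : seq T * {ffun P -> nat}) (s : seq (option bool)) : {ffun P -> nat} :=
  [ffun p => a.2 p - (b.2 p + csum b.1 s p)].

Lemma G1_proof (e e' : Obj) (h : Hom e e') :
  (size (tval (val h)) == size (G0 e')) && (kept (val h) (G0 e') == G0 e).
Proof.
case: h => hs Hh /=; case/andP: Hh => /eqP Hh _.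
by rewrite /G0 size_map size_tuple eqxx /= /kept -map_mask -/(kept hs _) Hh.
Qed.

Definition G1 (e e' : Obj) (h : Hom e e') : @bhom Sigma P (G0 e) (G0 e') :=
  (exist _ (tval (val h)) (G1_proof h), wof (ssval e) (ssval e') (val h)).

Lemma bhomP V U (f g : @bhom Sigma P V U) : val f.1 = val g.1 -> f.2 =1 g.2 -> f = g.
Proof.
case: f g => [f1 f2] [g1 g2] /= H1 H2.
by rewrite (val_inj H1); congr pair; apply/ffunP.
Qed.

Lemma G1_id (e : Obj) : G1 (idH e) = @bid Sigma P (G0 e).
Proof.
apply: bhomP => [|p]; first by rewrite /= /G0 size_map.
by rewrite /= !ffunE csum_nseq addn0 subnn.
Qed.

Lemma G1_comp (e1 e2 e3 : Obj) (g : Hom e2 e3) (f : Hom e1 e2) :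
  G1 (compH g f) = @bcomp Sigma P _ _ _ (G1 g) (G1 f).
Proof.
apply: bhomP => [//|p] /=; rewrite !ffunE.
case: g f => [gs Hg] [fs Hf] /=.
case/andP: Hg => /eqP Hg /forallP /(_ p) Hg2; case/andP: Hf => /eqP Hf /forallP /(_ p) Hf2.
rewrite csum_comp ?size_tuple // Hg.
move: Hg2 Hf2.
set a := (ssval e3).2 p; set b := (ssval e2).2 p; set c := (ssval e1).2 p.
set x := csum _ gs p; set y := csum _ fs p.
lia.
Qed.

Lemma Xact_comp (W V U : seq Sigma) (phi : @bhom Sigma P V U) (psi : @bhom Sigma P W V)
  (x : Xob N U) :
  val (Xact (@bcomp Sigma P _ _ _ phi psi) x) = val (Xact psi (Xact phi x)).
Proof.
case: phi psi x => [[s Hs] w1] [[t Ht] w2] [[tx vx] Hx] /=.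
rewrite /Xact_raw /=.
case/andP: Hs => /eqP Hs /eqP HV; case/andP: Ht => /eqP Ht /eqP HW.
move/eqP: Hx => Hx; subst U.
rewrite size_map in Hs.
have Ht' : size t = size (kept s tx) by rewrite Ht -HV /kept -map_mask size_map.
have [_ ->] := ccomp_ok Hs Ht'.
congr pair; apply/ffunP => p; rewrite !ffunE.
have := @csum_comp tx s t p Hs; rewrite /csum /= => ->; lia.
Qed.

Lemma actG1 (e e' : Obj) (h : Hom e e') : actq (G1 h) (Gel e') = Gel e.
Proof.
apply: ZqP => /=; rewrite /Xact_raw /=.
case: h => hs Hh /=; case/andP: Hh => /eqP Hh /forallP Hh2.
case: (ssval e) Hh Hh2 => t v /= -> Hh2; congr pair; apply/ffunP => p; rewrite !ffunE.
move: (Hh2 p); rewrite /csum /=; lia.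
Qed.

Definition Phi U (x : {e : Obj & @bhom Sigma P U (G0 e)}) : Zq U :=
  actq (projT2 x) (Gel (projT1 x)).

Lemma canon_mem U (z : Zq U) : ((val (val z)).1, [ffun=> 0]) \in L.
Proof. by apply: LP; [exact: (valP z) | move=> p; rewrite ffunE]. Qed.

Lemma canon_proof U (z : Zq U) :
  (size (nseq (size U) (@None bool)) == size (map lab (val (val z)).1))
  && (kept (nseq (size U) None) (map lab (val (val z)).1) == U).
Proof.
case: z => [[[u v] Hu] Qu] /=.
by rewrite size_nseq -(eqP Hu) /= eqxx kept_nseq ?eqxx.
Qed.

Definition canon U (z : Zq U) : {e : Obj & @bhom Sigma P U (G0 e)} :=
  existT (fun e => @bhom Sigma P U (G0 e)) (@SeqSub _ L _ (canon_mem z))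
    (exist _ (nseq (size U) None) (canon_proof z), (val (val z)).2).

Lemma Phi_canon U (z : Zq U) : Phi (canon z) = z.
Proof.
apply: ZqP; case: z => [[[u v] Hu] Qu] /=.
rewrite /Xact_raw /= kept_nseq; last by rewrite -(eqP Hu) /= size_map.
by congr pair; apply/ffunP => p; rewrite !ffunE -/(csum _ _ _) csum_nseq.
Qed.

Lemma canon_eq U (z : Zq U) (H : ((val (val z)).1, [ffun=> 0]) \in L)
  (h : @bhom Sigma P U (map lab (val (val z)).1)) :
  val h.1 = nseq (size U) None -> h.2 =1 (val (val z)).2 ->
  canon z = existT (fun e => @bhom Sigma P U (G0 e)) (@SeqSub _ L _ H) h.
Proof.
move=> H1 H2; rewrite /canon (bool_irrelevance H (canon_mem z)).
by congr existT; apply: bhomP.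
Qed.

Definition R U := @colim_step (seq Sigma) (@bhom Sigma P) (@bcomp Sigma P) E G0 (@G1) U.

Lemma to_canon U (x : {e : Obj & @bhom Sigma P U (G0 e)}) :
  clos_refl_sym_trans _ (@R U) x (canon (Phi x)).
Proof.
case: x => e phi.
case: e phi => [[t c0] He] phi.
have Qt : Q t := LQ He.
have Ht : size (val phi.1) = size t.
  by case/andP: (valP phi.1) => /eqP -> _; rewrite /G0 size_map.
have HU : U = map lab (kept (val phi.1) t).
  case/andP: (valP phi.1) => _ /eqP H.
  by apply/esym; rewrite /kept map_mask; exact: H.
set s := val phi.1 in Ht HU.
have m1 : (t, [ffun=> 0]) \in L by apply: LP => // p; rewrite ffunE.
pose e1 := @SeqSub _ L _ m1.
have g1 : good (t, c0) (t, [ffun=> 0]) (nseq (size t) None).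
  rewrite /good kept_nseq //= eqxx /=; apply/forallP => p.
  by rewrite ffunE csum_nseq.
pose a1 : Hom (@SeqSub _ L _ He) e1 := exist _ (nseq_tuple (size t) None) g1.
have m2 : (kept s t, [ffun p => csum t s p]) \in L.
  apply: LP; first exact: HQ.
  by move=> p; rewrite ffunE; apply: leq_trans (csum_le _ _ _) (HM Qt).
pose e2 := @SeqSub _ L _ m2.
have Hst : size s == size t by rewrite Ht.
have g2 : good (kept s t, [ffun p => csum t s p]) (t, [ffun=> 0]) (Tuple Hst).
  rewrite /good /= eqxx /=; apply/forallP => p; by rewrite !ffunE.
pose a2 : Hom e2 e1 := exist _ (Tuple Hst) g2.
have pf2 : (size (nseq (size U) (@None bool)) == size (G0 e2))
  && (kept (nseq (size U) None) (G0 e2) == U).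
  by rewrite /G0 /= HU size_nseq eqxx kept_nseq // eqxx.
pose psi2 : @bhom Sigma P U (G0 e2) :=
  (exist _ (nseq (size U) None) pf2,
   (@bcomp Sigma P _ _ _ (G1 a1) phi).2).
have m3 : (kept s t, [ffun=> 0]) \in L by apply: LP; [exact: HQ | move=> p; rewrite ffunE].
pose e3 := @SeqSub _ L _ m3.
have g3 : good (kept s t, [ffun p => csum t s p]) (kept s t, [ffun=> 0])
            (nseq (size (kept s t)) None).
  rewrite /good kept_nseq //= eqxx /=; apply/forallP => p.
  by rewrite !ffunE csum_nseq.
pose a3 : Hom e2 e3 := exist _ (nseq_tuple (size (kept s t)) None) g3.
apply: (@rst_trans _ _ _ (existT _ e1 (@bcomp Sigma P _ _ _ (G1 a1) phi))).
  by apply: rst_step; constructor.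
have -> : existT (fun e => @bhom Sigma P U (G0 e)) e1 (@bcomp Sigma P _ _ _ (G1 a1) phi)
   = existT _ e1 (@bcomp Sigma P _ _ _ (G1 a2) psi2).
  congr existT; apply: bhomP => [|p] /=.
    by rewrite ccomp_nseqr -Ht ccomp_nseql.
  by rewrite !ffunE /= add0n subnn add0n.
apply: (@rst_trans _ _ _ (existT _ e2 psi2)).
  by apply: rst_sym; apply: rst_step; constructor.
apply: (@rst_trans _ _ _ (existT _ e3 (@bcomp Sigma P _ _ _ (G1 a3) psi2))).
  by apply: rst_step; constructor.
rewrite (@canon_eq U (Phi (existT (fun e : Obj => @bhom Sigma P U (G0 e)) (@SeqSub _ L _ He) phi)) m3 (@bcomp Sigma P _ _ _ (G1 a3) psi2)).
- exact: rst_refl.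
- have -> : size U = size (kept s t) by rewrite HU size_map.
  by rewrite /= ccomp_nseqr.
- move=> p; rewrite !ffunE /= !csum_nseq !add0n !subn0 addnA; congr (_ + _).
  by rewrite addnC.
Qed.

Theorem gen_fin : fin_generated (@bhom Sigma P) (@bid Sigma P) (@bcomp Sigma P) Zq actq.
Proof.
exists E, G0, (@G1); split; first exact: G1_id.
split; first by move=> e1 e2 e3 g f; exact: G1_comp.
exists Phi; split; [|split].
- by move=> U z; exists (canon z); exact: Phi_canon.
- move=> U V psi [e phi]; apply: ZqP; exact: Xact_comp.
- move=> U x y; split.
  + move=> H; apply: rst_trans (to_canon x) _; rewrite H.
    by apply: rst_sym; exact: to_canon.
  + elim => {x y} [x y Hxy | x | x y _ IH | x y z _ IH1 _ IH2] //.
    * case: Hxy => e e' al phi.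
      have := Xact_comp (G1 al) phi (val (Gel e')).
      have HA : Xact (G1 al) (val (Gel e')) = val (Gel e) := congr1 val (actG1 al).
      rewrite HA => H; apply: ZqP; exact: (esym H).
    * by rewrite IH1.
Qed.

End Gen.

Lemma fin_gen_ext (Ob : Type) (Hom : Ob -> Ob -> Type) idD compD (Z : Ob -> Type)
  (act act' : forall a b, Hom a b -> Z b -> Z a) :
  (forall a b m z, act a b m z = act' a b m z) ->
  fin_generated Hom idD compD Z act -> fin_generated Hom idD compD Z act'.
Proof.
move=> Hact [E0 [G00 [G10 [H1 [H2 [Phi0 [H3 [H4 H5]]]]]]]].
exists E0, G00, G10; split => //; split => //; exists Phi0; split => //; split => //.
by move=> U V psi x; rewrite -Hact.
Qed.

Theorem proposition17 (Sigma : finType) (N : petri_net Sigma) :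
  fin_generated (@bhom Sigma (pn_P N)) (@bid Sigma (pn_P N)) (@bcomp Sigma (pn_P N))
    (Xnac_ob N) (@Xnac_act Sigma N)
  /\ (forall d : nat, 1 <= d ->
        fin_generated (@bhom Sigma (pn_P N)) (@bid Sigma (pn_P N))
          (@bcomp Sigma (pn_P N)) (Xle_ob N d) (@Xle_act Sigma N d))
  /\ (forall start accept : {U : seq Sigma & Xnac_ob N U} -> Prop,
        fin_pred start -> fin_pred accept ->
        hda_fin_type (@bhom Sigma (pn_P N)) (@bid Sigma (pn_P N))
          (@bcomp Sigma (pn_P N)) (Xnac_ob N) (@Xnac_act Sigma N) start accept)
  /\ (forall d : nat, 1 <= d ->
        forall start accept : {U : seq Sigma & Xle_ob N d U} -> Prop,
        fin_pred start -> fin_pred accept ->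
        hda_fin_type (@bhom Sigma (pn_P N)) (@bid Sigma (pn_P N))
          (@bcomp Sigma (pn_P N)) (Xle_ob N d) (@Xle_act Sigma N d) start accept).
Proof.
have Hnac : fin_generated (@bhom Sigma (pn_P N)) (@bid Sigma (pn_P N))
    (@bcomp Sigma (pn_P N)) (Xnac_ob N) (@Xnac_act Sigma N).
  have HQ : forall m (t : seq (pn_T N)), uniq t -> uniq (mask m t).
    by move=> m t Ht; rewrite mask_uniq.
  have HM : forall t : seq (pn_T N), uniq t -> size t <= #|pn_T N|.
    by move=> t Ht; rewrite cardE; apply: uniq_leq_size => // x; rewrite mem_enum.
  apply: fin_gen_ext (@gen_fin Sigma N (fun t => uniq t) HQ _ HM).
  by move=> a b m z; apply: val_inj.
have Hle : forall d, fin_generated (@bhom Sigma (pn_P N)) (@bid Sigma (pn_P N))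
    (@bcomp Sigma (pn_P N)) (Xle_ob N d) (@Xle_act Sigma N d).
  move=> d.
  have HQ : forall m (t : seq (pn_T N)), size t <= d -> size (mask m t) <= d.
    by move=> m t Ht; apply: leq_trans Ht; rewrite size_subseq // mask_subseq.
  have HM : forall t : seq (pn_T N), size t <= d -> size t <= d by [].
  apply: fin_gen_ext (@gen_fin Sigma N (fun t => size t <= d) HQ _ HM).
  by move=> a b m z; apply: val_inj.
split; first exact: Hnac.
split; first by move=> d _; exact: Hle.
split; first by move=> start accept Hs Ha; split.
by move=> d _ start accept Hs Ha; split.
Qed.
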